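(* Let $\kappa$ be a regular uncountable cardinal, $I$ an ideal on $\kappa$, and $L=\{\lambda+1:\lambda<\kappa \text{ a limit ordinal}\}$. Then $I$ is normal if and only if $I$ is pleasant and $L\in I$.
   Context: An ideal on $\kappa$ is a family of subsets of $\kappa$ closed under subsets and finite unions, which is $<\kappa$-complete and contains all singletons. For $A\subseteq\kappa$ and $X_\alpha\subseteq\kappa$, $\bigtriangledown_{\alpha\in A}X_\alpha=\{\xi<\kappa:\exists\alpha<\xi\,(\alpha\in A\wedge \xi\in X_\alpha)\}$. $I$ is normal if $X_\alpha\in I$ for all $\alpha<\kappa$ implies $\bigtriangledown_{\alpha<\kappa}X_\alpha\in I$. $I$ is pleasant if whenever $A\in I$ and $X_\alpha\in I$ for all $\alpha$, then $\bigtriangledown_{\alpha\in A}X_\alpha\in I$. *)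

(* Defs.v *)
From HB Require Import structures.
From mathcomp Require Import all_boot all_order.
Set Implicit Arguments. Unset Strict Implicit. Unset Printing Implicit Defensive.
Import Order.TTheory.
Local Open Scope order_scope.

(* The cardinal kappa is represented by a totally ordered type T (its
   elements are the ordinals < kappa, ordered by <). *)

(* |J| < |T|  (classically: there is no injection of T into J). *)
Definition smaller_than (T J : Type) : Prop :=
  ~ exists f : T -> J, injective f.

Section Card.
Context {d : Order.disp_t} (T : orderType d).

Definition wellordered : Prop :=
  forall A : T -> Prop, (exists x, A x) ->
    exists x, A x /\ forall y, A y -> x <= y.

Definition is_cardinal : Prop :=
  forall x : T, smaller_than T {y : T | y < x}.

Definition regular : Prop :=
  forall A : T -> Prop, smaller_than T {a : T | A a} ->
    exists b : T, forall a, A a -> a < b.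

Definition uncountable : Prop := ~ exists f : T -> nat, injective f.

Definition regular_uncountable_cardinal : Prop :=
  [/\ wellordered, is_cardinal, regular & uncountable].

Definition is_ideal (I : (T -> Prop) -> Prop) : Prop :=
  [/\ (forall X Y : T -> Prop, I X -> (forall x, Y x -> X x) -> I Y),
      (forall X Y : T -> Prop, I X -> I Y -> I (fun x => X x \/ Y x)),
      (forall (J : Type) (F : J -> T -> Prop), smaller_than T J ->
          (forall j, I (F j)) -> I (fun x => exists j, F j x))
    & (forall a : T, I (fun x => x = a))].

Definition diag_union (A : T -> Prop) (X : T -> T -> Prop) : T -> Prop :=
  fun xi => exists alpha, alpha < xi /\ A alpha /\ X alpha xi.

Definition normal (I : (T -> Prop) -> Prop) : Prop :=
  forall X : T -> T -> Prop, (forall alpha, I (X alpha)) ->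
    I (diag_union (fun _ => True) X).

Definition pleasant (I : (T -> Prop) -> Prop) : Prop :=
  forall (A : T -> Prop) (X : T -> T -> Prop), I A ->
    (forall alpha, I (X alpha)) -> I (diag_union A X).

Definition succ_of (x y : T) : Prop :=
  x < y /\ forall z, x < z -> y <= z.

Definition is_limit (l : T) : Prop :=
  (exists z, z < l) /\ ~ exists x, succ_of x l.

Definition Lset : T -> Prop :=
  fun y => exists l, is_limit l /\ succ_of l y.

End Card.

(* Main.v *)
Require Import Defs.
From mathcomp Require Import all_boot all_order.
From Stdlib Require Import Classical ClassicalEpsilon.
Import Order.TTheory.

Section H.
Context {d : Order.disp_t} (T : orderType d).
Local Open Scope order_scope.

Lemma succ_uniq (x y y' : T) : succ_of x y -> succ_of x y' -> y = y'.
Proof. move=> [h1 h2] [h1' h2']. apply/le_anti. by rewrite h2 // h2'. Qed.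

Lemma small_inj (J J' : Type) (h : J' -> J) : injective h ->
  smaller_than T J -> smaller_than T J'.
Proof. move=> hi hs [f fi]; apply: hs; exists (h \o f); exact: inj_comp. Qed.

Lemma sig_eq (P : T -> Prop) (a b : {x | P x}) : sval a = sval b -> a = b.
Proof.
case: a => a pa; case: b => b pb /= e; subst b.
by rewrite (proof_irrelevance _ pa pb).
Qed.

Lemma inhab : uncountable T -> exists a : T, True.
Proof.
move=> hu; apply: NNPP => hn; apply: hu; exists (fun _ => 0%N) => x.
exfalso; apply: hn; by exists x.
Qed.

Lemma at_most_one (I : (T -> Prop) -> Prop) (a : T) (P : T -> Prop) :
  is_ideal I -> (forall x y, P x -> P y -> x = y) -> I P.
Proof.
move=> [hsub _ _ hsing] hu.
case: (classic (exists x, P x)) => [[x Px]|hn].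
- apply: (hsub _ _ (hsing x)) => y Py; exact: hu.
- apply: (hsub _ _ (hsing a)) => y Py; exfalso; apply: hn; by exists y.
Qed.

Lemma nomax : regular T -> uncountable T -> forall x : T, exists y, x < y.
Proof.
move=> hr hu x.
have [b hb] : exists b, forall a, a = x -> a < b.
  apply: hr => -[f fi]; apply: hu; exists (fun _ => 0%N) => y z _.
  apply: fi; apply: sig_eq; by rewrite (svalP (f y)) (svalP (f z)).
by exists b; apply: hb.
Qed.

Lemma succ_ex : wellordered T -> regular T -> uncountable T ->
  forall x : T, exists y, succ_of x y.
Proof.
move=> hw hr hu x. have [y0 hy0] := nomax hr hu x.
have [y [hy hmin]] := hw (fun y => x < y) (ex_intro _ y0 hy0).
by exists y; split.
Qed.

Lemma bounded_block : regular_uncountable_cardinal T -> forall g : T,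
 smaller_than T {a : T | forall z, g < z -> z <= a -> exists u, succ_of u z}.
Proof.
move=> [hw hc hr hu] g.
have nxt : forall x : T, {y | succ_of x y}.
  move=> x; apply: constructive_indefinite_description; exact: succ_ex.
pose f := fix f n := if n is m.+1 then sval (nxt (f m)) else g.
pose S := fun x => g <= x /\ forall z, g < z -> z <= x -> exists u, succ_of u z.
have inr : forall x, S x -> exists n, f n = x.
  move=> x Sx; apply: NNPP => hn.
  have [y [[Sy nr] ymin]] := hw (fun y => S y /\ ~ exists n, f n = y)
     (ex_intro _ x (conj Sx hn)).
  case: Sy => gy hy.
  case: (eqVneq y g) => [eyg|nyg]; first by apply: nr; exists 0%N.
  have gly : g < y by rewrite lt_neqAle eq_sym nyg gy.
  have [u su] := hy y gly (lexx y).
  have gu : g <= u.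
    rewrite leNgt; apply/negP => ug. case: su => _ h. have := h _ ug.
    by rewrite leNgt gly.
  have Su : S u.
    split=> // z gz zu; apply: hy => //; apply: le_trans zu _; apply: ltW.
    by case: su.
  have [n fn] : exists n, f n = u.
    apply: NNPP => hn'. have := ymin u (conj Su hn'). case: su => uy _.
    by rewrite leNgt uy.
  apply: nr; exists n.+1 => /=. rewrite fn. exact: succ_uniq (svalP (nxt u)) su.
have hS : smaller_than T {x | S x}.
  move=> [h hi]. apply: hu.
  pose k := fun x : {x | S x} =>
     sval (constructive_indefinite_description _ (inr _ (svalP x))).
  have kP : forall x, f (k x) = sval x.
    move=> x; exact: (svalP (constructive_indefinite_description _ (inr _ (svalP x)))).
  exists (fun t => k (h t)) => t1 t2 e. apply: hi.
  apply: sig_eq; by rewrite -(kP (h t1)) e kP.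
have [b hb] := hr S hS.
have Sg : S g.
  split=> // z gz zg; exfalso; move: zg; by rewrite leNgt gz.
have hlt : forall a : {a : T | forall z, g < z -> z <= a -> exists u, succ_of u z},
    sval a < b.
  move=> [a pa] /=. case: (leP a g) => ag.
    exact: le_lt_trans ag (hb _ Sg).
  apply: hb; split; [exact: ltW | exact: pa].
apply: (@small_inj _ _ (fun a => exist (fun y => y < b) (sval a) (hlt a))) (hc b).
move=> a1 a2 /(congr1 sval) /= e; exact: sig_eq.
Qed.

End H.

Theorem corollary3p8 (d : Order.disp_t) (T : orderType d)
    (I : (T -> Prop) -> Prop) :
  regular_uncountable_cardinal T -> is_ideal I ->
  (normal I <-> pleasant I /\ I (@Lset _ T)).
Proof.
move=> hk hI; have hk' := hk; case: hk' => hw hc hr hu.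
have [a0 _] := @inhab _ T hu.
have hI' := hI; case: hI' => hsub hunion hcomp hsing.
split.
- move=> hn; split.
  + move=> A X _ hX. apply: (hsub _ _ (hn X hX)) => x [al [h1 [_ h3]]].
    by exists al.
  + pose X := fun al xi : T => is_limit al /\ succ_of al xi.
    have hX : forall al, I (X al).
      move=> al; apply: (@at_most_one _ T I a0 _ hI) => x y [_ h1] [_ h2].
      exact: succ_uniq h1 h2.
    apply: (hsub _ _ (hn X hX)).
    move=> y [l [hl hs]]. exists l; split; first by case: hs. by split.
- move=> [hp hL] X hX.
  pose A := fun g : T => exists p, succ_of p g /\ ~ exists u, succ_of u p.
  pose Bg := fun g a : T => forall z, (g < z)%O -> (z <= a)%O -> exists u, succ_of u z.
  pose W := fun g x : T => exists j : {a | Bg g a}, X (sval j) x.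
  have IA : I A.
    pose S1 := fun g : T => exists p, succ_of p g /\ ~ exists z, (z < p)%O.
    have IS1 : I S1.
      apply: (@at_most_one _ T I a0 _ hI) => x y [p [sp np]] [q [sq nq]].
      have epq : p = q.
        case: (ltgtP p q) => // h; [by case: nq; exists p | by case: np; exists q].
      subst q; exact: succ_uniq sp sq.
    apply: (hsub _ _ (hunion _ _ hL IS1)) => g [p [sp np]].
    case: (classic (exists z, (z < p)%O)) => hz.
      by left; exists p; split => //; split.
    by right; exists p; split.
  have IW : forall g, I (W g).
    move=> g; apply: (hcomp _ (fun j : {a | Bg g a} => X (sval j))) => //.
    exact: bounded_block.
  have hD := hp A W IA IW.
  apply: (hsub _ _ (hunion _ _ IA hD)) => x [al [alx [_ Xax]]].
  case: (classic (A x)) => Ax; first by left.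
  right.
  pose Q := fun q : T => (q <= al)%O /\
     forall z, (q < z)%O -> (z <= al)%O -> exists u, succ_of u z.
  have Qal : Q al.
    split=> // z h1 h2; exfalso; move: h2; by rewrite leNgt h1.
  have [p [[pal hpq] pmin]] := hw Q (ex_intro _ al Qal).
  have pns : ~ exists u, succ_of u p.
    move=> [u su]. have Qu : Q u.
      split. apply: le_trans (ltW _) pal; by case: su.
      move=> z uz zal. case: (eqVneq z p) => [->|nzp]; first by exists u.
      apply: hpq => //. rewrite lt_neqAle eq_sym nzp /=. exact: (proj2 su) z uz.
    have := pmin u Qu. case: su => up _. by rewrite leNgt up.
  have [g sg] := @succ_ex _ T hw hr hu p.
  have Ag : A g by exists p.
  have gx : (g < x)%O.
    have px : (p < x)%O := le_lt_trans pal alx.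
    have gle : (g <= x)%O := proj2 sg x px.
    rewrite lt_neqAle gle andbT. apply/eqP => egx. by apply: Ax; rewrite -egx.
  exists g; split=> //; split=> //.
  exists (exist (Bg g) al (fun z gz zal => hpq z (lt_trans (proj1 sg) gz) zal)).
  exact: Xax.
Qed.
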